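(* Let $\mathcal{C}=(\mathcal{T},\mathcal{I},\mathcal{R})$ be an extraction context with thresholds \textit{minsupp} and \textit{minbond}. Then $\mathcal{M}in\mathcal{MM}ax\mathcal{CR}=\mathcal{M}ax\mathcal{CRCP}\cup\mathcal{M}in\mathcal{MRCP}$, with each element $J$ recorded together with $\mathit{Supp}(\wedge J)$ and $\mathit{bond}(J)$, is an approximate concise representation of the set $\mathcal{RCP}$ of rare correlated patterns; that is, for every pattern $I\subseteq\mathcal{I}$, the recorded data alone suffice to decide whether $I\in\mathcal{RCP}$.
   Context: An extraction context is a triple $\mathcal{C}=(\mathcal{T},\mathcal{I},\mathcal{R})$ with $\mathcal{T}$ a finite set of transactions, $\mathcal{I}$ a finite set of items and $\mathcal{R}\subseteq\mathcal{T}\times\mathcal{I}$. For a pattern $I\subseteq\mathcal{I}$: $\mathit{Supp}(\wedge I)=|\{t:\forall i\in I,(t,i)\in\mathcal{R}\}|$, $\mathit{Supp}(\vee I)=|\{t:\exists i\in I,(t,i)\in\mathcal{R}\}|$, and for nonempty $I$, $\mathit{bond}(I)=\mathit{Supp}(\wedge I)/\mathit{Supp}(\vee I)$ (with $\mathit{bond}(\emptyset)=+\infty$ by convention). $\mathcal{CP}=\{I:\mathit{bond}(I)\ge\textit{minbond}\}$; $\mathcal{RCP}=\{I\in\mathcal{CP}:\mathit{Supp}(\wedge I)<\textit{minsupp}\}$. $\mathcal{CRCP}=\{I\in\mathcal{RCP}:\forall I_1\supsetneq I,\ \mathit{bond}(I)>\mathit{bond}(I_1)\}$; $\mathcal{MRCP}=\{I\in\mathcal{RCP}:\forall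 I_1\subsetneq I,\ \mathit{bond}(I)<\mathit{bond}(I_1)\}$. $\mathcal{M}ax\mathcal{CP}=\{I\in\mathcal{CP}:\forall I_1\supsetneq I,\ \mathit{bond}(I_1)<\textit{minbond}\}$ and $\mathcal{M}ax\mathcal{CRCP}=\mathcal{CRCP}\cap\mathcal{M}ax\mathcal{CP}$. $\mathcal{M}in\mathcal{RP}$ is the set of patterns $I$ with $\mathit{Supp}(\wedge I)<\textit{minsupp}$ whose proper subsets all have conjunctive support $\ge\textit{minsupp}$, and $\mathcal{M}in\mathcal{MRCP}=\mathcal{MRCP}\cap\mathcal{M}in\mathcal{RP}$. *)

(* Defs.v *)
(* Patterns are finite sets of items; bond takes values in
   the extended rationals \bar rat so that bond(set0) = +oo. *)
From HB Require Import structures.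
From mathcomp Require Import all_boot all_order all_algebra.
From mathcomp Require Export constructive_ereal.
Set Implicit Arguments. Unset Strict Implicit. Unset Printing Implicit Defensive.
Import Order.TTheory GRing.Theory Num.Theory.

Section Context.
Variables (Tr Item : finType) (R : {set Tr * Item}).
Variables (minsupp : nat) (minbond : rat).

Definition suppAnd (I : {set Item}) : nat :=
  #|[set t : Tr | [forall i in I, (t, i) \in R]]|.
Definition suppOr (I : {set Item}) : nat :=
  #|[set t : Tr | [exists i in I, (t, i) \in R]]|.

(* bond(I) = Supp(/\I)/Supp(\/I) for nonempty I, +oo for the empty pattern.
   (Mathcomp convention x/0 = 0 applies when Supp(\/I) = 0.) *)
Definition bond (I : {set Item}) : \bar rat :=
  if I == set0 then (+oo)%E
  else ((suppAnd I)%:R / (suppOr I)%:R : rat)%:E.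

Definition CP : {set {set Item}} := [set I | (minbond%:E <= bond I)%E].
Definition RCP : {set {set Item}} := [set I in CP | suppAnd I < minsupp].
Definition CRCP : {set {set Item}} :=
  [set I in RCP | [forall I1 : {set Item}, (I \proper I1) ==> (bond I1 < bond I)%E]].
Definition MRCP : {set {set Item}} :=
  [set I in RCP | [forall I1 : {set Item}, (I1 \proper I) ==> (bond I < bond I1)%E]].
Definition MaxCP : {set {set Item}} :=
  [set I in CP | [forall I1 : {set Item}, (I \proper I1) ==> (bond I1 < minbond%:E)%E]].
Definition MaxCRCP : {set {set Item}} := CRCP :&: MaxCP.
Definition MinRP : {set {set Item}} :=
  [set I | (suppAnd I < minsupp) &&
           [forall I1 : {set Item}, (I1 \proper I) ==> (minsupp <= suppAnd I1)]].
Definition MinMRCP : {set {set Item}} := MRCP :&: MinRP.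
Definition MinMMaxCR : {set {set Item}} := MaxCRCP :|: MinMRCP.

(* The recorded data: each J in MinMMaxCR together with Supp(/\J) and bond(J);
   patterns outside the representation are recorded as None. *)
Definition rep (J : {set Item}) : option (nat * \bar rat) :=
  if J \in MinMMaxCR then Some (suppAnd J, bond J) else None.

End Context.

(* Main.v *)
Require Import Defs.
From mathcomp Require Import all_boot all_order all_algebra.
From mathcomp Require Import constructive_ereal zify.
Set Implicit Arguments. Unset Strict Implicit.
Import Order.TTheory GRing.Theory Num.Theory.
Local Open Scope ring_scope.
Lemma ratle (sA oA sB oB : nat): (sA <= oA)%N -> (sB <= sA)%N -> (oA <= oB)%N ->
  (sB%:R / oB%:R <= sA%:R / oA%:R :> rat).
Proof.
case: oA => [|oA] h1 h2 h3.
  have->: sA = 0%N by lia. have->: sB = 0%N by lia. by rewrite !mul0r.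
rewrite ler_pdivrMr ?ltr0n; last lia.
rewrite mulrAC ler_pdivlMr ?ltr0n // -!natrM ler_nat. nia.
Qed.
Lemma ratlt (sA oA sB oB : nat): (sA < sB)%N -> (sB <= oB)%N -> (oB <= oA)%N ->
  (sA%:R / oA%:R < sB%:R / oB%:R :> rat).
Proof.
case: oA => [|oA] h1 h2 h3.
  rewrite invr0 mulr0 divr_gt0 // ltr0n; lia.
rewrite ltr_pdivrMr ?ltr0n; last lia.
rewrite mulrAC ltr_pdivlMr ?ltr0n; last lia. rewrite -!natrM ltr_nat. nia.
Qed.
Section S.
Variables (Tr Item : finType) (R : {set Tr * Item}) (minsupp : nat) (minbond : rat).
Let sa := suppAnd R. Let so := suppOr R. Let bd := bond R.
Lemma andOr (I : {set Item}) : I != set0 -> (sa I <= so I)%N.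
Proof.
move=> /set0Pn [i iI]; apply: subset_leq_card; apply/subsetP => t.
rewrite !inE => /forall_inP H; apply/exists_inP; exists i => //; exact: H.
Qed.
Lemma andAnti (A B : {set Item}) : A \subset B -> (sa B <= sa A)%N.
Proof.
move=> sAB; apply: subset_leq_card; apply/subsetP => t.
rewrite !inE => /forall_inP H; apply/forall_inP => i iA; apply: H; exact: (subsetP sAB).
Qed.
Lemma orMono (A B : {set Item}) : A \subset B -> (so A <= so B)%N.
Proof.
move=> sAB; apply: subset_leq_card; apply/subsetP => t.
rewrite !inE => /exists_inP [i iA H]; apply/exists_inP; exists i => //; exact: (subsetP sAB).
Qed.
Lemma bondAnti (A B : {set Item}) : A \subset B -> (bd B <= bd A)%E.
Proof.
move=> sAB; rewrite /bd /bond. case nA0: (A == set0); first by rewrite leey.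
have nA : A != set0 by rewrite nA0.
have nB : B != set0.
  by apply: contra nA => /eqP B0; move: sAB; rewrite B0 subset0.
rewrite (negPf nB) lee_fin; apply: ratle.
- exact: andOr. - exact: andAnti. - exact: orMono.
Qed.
Lemma bondStrict (K1 K : {set Item}) : K1 \proper K -> (sa K < sa K1)%N -> (bd K < bd K1)%E.
Proof.
move=> pK hs; rewrite /bd /bond.
have nK : K != set0.
  apply/negP => /eqP K0; move: pK; rewrite K0.
  by case/properP => _ [x]; rewrite inE.
rewrite (negPf nK); case nK10: (K1 == set0); first by rewrite ltey.
have nK1 : K1 != set0 by rewrite nK10.
rewrite lte_fin; apply: ratlt => //.
- exact: andOr. - apply: orMono; exact: proper_sub.
Qed.
Lemma repRCP (J : {set Item}) : J \in MinMMaxCR R minsupp minbond -> J \in RCP R minsupp minbond.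
Proof.
rewrite /MinMMaxCR /MaxCRCP /MinMRCP /CRCP /MRCP !in_setU !in_setI !in_set.
by case/orP => /and3P [/andP [/andP [-> ->] _] _ _].
Qed.
End S.
Local Close Scope ring_scope.
Theorem mainTheorem8 (Item : finType) (minsupp : nat) (minbond : rat) :
  exists dec : ({set Item} -> option (nat * \bar rat)) -> {set Item} -> bool,
    forall (Tr : finType) (R : {set Tr * Item}) (I : {set Item}),
      dec (rep R minsupp minbond) I = (I \in RCP R minsupp minbond).
Proof.
exists (fun (r : {set Item} -> option (nat * \bar rat)) (I : {set Item}) => [exists J : {set Item}, (r J != None) && (I \subset J)] &&
                  [exists K : {set Item}, (r K != None) && (K \subset I)]).
move=> Tr R I.
have repE J : (rep R minsupp minbond J != None) = (J \in MinMMaxCR R minsupp minbond).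
  by rewrite /rep; case: ifP.
apply/idP/idP.
  case/andP => /existsP [J /andP [rJ sIJ]] /existsP [K /andP [rK sKI]].
  rewrite repE in rJ; rewrite repE in rK; move/repRCP: rJ; move/repRCP: rK.
  rewrite !inE => /andP [_ hK] /andP [hJ _]; apply/andP; split.
    exact: le_trans hJ (bondAnti R sIJ).
  exact: leq_ltn_trans (andAnti R sKI) hK.
rewrite !inE => /andP [hb hs]; apply/andP; split.
  have PI : (I \subset I) && (minbond%:E <= bond R I)%E by rewrite subxx hb.
  case: (@arg_maxnP _ I (fun J => (I \subset J) && (minbond%:E <= bond R J)%E) (fun J => #|J|) PI).
  move=> J /andP [sIJ hJb] mx.
  have key (J1 : {set Item}) : J \proper J1 -> (bond R J1 < minbond%:E)%E.
    move=> pJ1; rewrite ltNge; apply/negP => h.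
    have := mx J1; rewrite (subset_trans sIJ (proper_sub pJ1)) h => /(_ isT) H.
    by have := leq_trans (proper_card pJ1) H; rewrite ltnn.
  apply/existsP; exists J; rewrite sIJ andbT repE /MinMMaxCR in_setU; apply/orP; left.
  rewrite !inE hJb (leq_ltn_trans (andAnti R sIJ) hs) /=.
  apply/andP; split; apply/forallP => J1; apply/implyP => pJ1; first exact: lt_le_trans (key _ pJ1) hJb.
  exact: key.
have PI : (I \subset I) && (suppAnd R I < minsupp) by rewrite subxx hs.
case: (@arg_minnP _ I (fun K => (K \subset I) && (suppAnd R K < minsupp)) (fun K => #|K|) PI).
move=> K /andP [sKI hK] mn.
have key (K1 : {set Item}) : K1 \proper K -> minsupp <= suppAnd R K1.
  move=> pK1; rewrite leqNgt; apply/negP => h.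
  have := mn K1; rewrite (subset_trans (proper_sub pK1) sKI) h => /(_ isT) H.
  by have := leq_trans (proper_card pK1) H; rewrite ltnn.
apply/existsP; exists K; rewrite sKI andbT repE /MinMMaxCR in_setU; apply/orP; right.
rewrite !inE hK (le_trans hb (bondAnti R sKI)) /=.
apply/andP; split; apply/forallP => K1; apply/implyP => pK1; last exact: key.
apply: bondStrict => //; exact: leq_trans hK (key _ pK1).
Qed.
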